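(* Assume $E_{l,m}$ is toric, i.e. $q-p$ divides $m$. Then the morphism $\psi=\gamma\times\eta_{-p,-1}\times\eta_{q,1}:\mathcal H\to E_{l,m}\times\mathbb P^1\times\mathbb P^1$ is bijective onto its image.
   Context: Let $l=p/q \in \mathbb Q \cap (0,1]$ with $\gcd(p,q)=1$ and $m \in \mathbb N$. Let $H_{q-p}=\{X_0^{q-p}=X_1X_4-X_2X_3\} \subset \mathbb C^5$, where $\mathbb C^5=V(0)\oplus V(1)\oplus V(1)$ with coordinates $X_0,\dots,X_4$ and $SL(2)$ acts by left multiplication on the matrix $\begin{pmatrix} X_1 & X_3\\ X_2 & X_4\end{pmatrix}$. Let $G_0=\{\mathrm{diag}(t,t^{-p},t^{-p},t^q,t^q): t\in\mathbb C^*\}$ and $G_m=\{\mathrm{diag}(1,\zeta^{-1},\zeta^{-1},\zeta,\zeta): \zeta^m=1\}$. Let $E_{l,m}=H_{q-p}/\!\!/(G_0\times G_m)$. Identify $\mathrm{Irr}(G_0\times G_m)$ with $\mathbb Z\times\mathbb Z/m\mathbb Z$ and let $h(n,d)=1$ for all $(n,d)$ (the Hilbert function of the general fibers of the quotient morphism). Let $\mathcal H=\mathrm{Hilb}^{G_0\times G_m}_h(H_{q-p})$ be the invariant Hilbert scheme and $\gamma:\mathcal H\to E_{l,m}$ the Hilbert–Chow morphism. The weight space of weight $(-p,-1)$ of $\mathbb C[H_{q-p}]$ is generated over the invariants by $F_{-p,-1}=\langle X_1,X_2\rangle$, and that of weight $(q,1)$ by $F_{q,1}=\langle X_3,X_4\rangle$.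 For $[Z]\in\mathcal H$ with ideal $I_Z$, $\eta_{-p,-1}([Z])\in\mathrm{Gr}(1,F_{-p,-1}^{\vee})\cong\mathbb P^1$ is the one-dimensional quotient $F_{-p,-1}/\mathrm{Ker}$, where $\mathrm{Ker}$ is the kernel of the natural map $F_{-p,-1}\to$ (weight $(-p,-1)$ part of $\mathbb C[Z]$), i.e. the line of linear forms $s_1X_1+s_2X_2$ lying in $I_Z$; the isomorphism with $\mathbb P^1$ is $\langle t_0X_1^\vee+t_1X_2^\vee\rangle\mapsto[t_0:t_1]$. Similarly $\eta_{q,1}:\mathcal H\to\mathrm{Gr}(1,F_{q,1}^{\vee})\cong\mathbb P^1$ using $X_3,X_4$. These are $SL(2)$-equivariant. *)

(* Defs.v *)
From HB Require Import structures.
From mathcomp Require Import all_boot all_algebra.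
From mathcomp Require Import reals Rstruct complex.
From mathcomp Require Import mpoly.

Set Implicit Arguments.
Unset Strict Implicit.
Unset Printing Implicit Defensive.

Import GRing.Theory.
Local Open Scope ring_scope.

Notation CC := (complex Rdefinitions.R).

Notation Pol := {mpoly CC[5]}.

Definition X (k : nat) : Pol := 'X_(inord k).

Definition heq (p q : nat) : Pol := X 0 ^+ (q - p) - (X 1 * X 4 - X 2 * X 3).

(* (t, zeta) parametrises an element of G_0 x G_m. *)
Definition inG (m : nat) (t z : CC) : Prop := t != 0 /\ z ^+ m = 1.

(* The diagonal entries of diag(t, t^-p, t^-p, t^q, t^q) * diag(1, z^-1, z^-1, z, z). *)
Definition lam (p q : nat) (t z : CC) (i : 'I_5) : CC :=
  match val i with
  | 0 => t
  | 1 | 2 => (t ^+ p)^-1 * z^-1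
  | _ => t ^+ q * z
  end.

Definition act (p q : nat) (t z : CC) (f : Pol) : Pol :=
  f \mPo [tuple (lam p q t z i) *: 'X_i | i < 5].

(* The character of G_0 x G_m indexed by (n, d) in Z x Z/mZ : (t,z) |-> t^n z^d. *)
Definition chi (n d : int) (t z : CC) : CC := t ^ n * z ^ d.

Definition is_ideal (I : Pol -> Prop) : Prop :=
  [/\ I 0, (forall a b, I a -> I b -> I (a + b)) & (forall r a, I a -> I (r * a))].

Definition G_stable (p q m : nat) (I : Pol -> Prop) : Prop :=
  forall t z, inG m t z -> forall f, I f -> I (act p q t z f).

(* f + I lies in the weight-(n,d) part of C[X]/I. *)
Definition in_weight (p q m : nat) (I : Pol -> Prop) (n d : int) (f : Pol) : Prop :=
  forall t z, inG m t z -> I (act p q t z f - chi n d t z *: f).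

(* Every weight space of C[Z] = C[X]/I is one-dimensional (Hilbert function h = 1). *)
Definition hilb_one (p q m : nat) (I : Pol -> Prop) : Prop :=
  forall n d : int, exists f : Pol,
    [/\ in_weight p q m I n d f, ~ I f &
        forall g, in_weight p q m I n d g -> exists c : CC, I (g - c *: f)].

(* Closed points of the invariant Hilbert scheme Hilb^{G_0 x G_m}_h(H_{q-p}):
   G-stable ideals I of C[X] containing the equation of H_{q-p}
   (= ideals of C[H_{q-p}]) whose quotient has Hilbert function h = 1. *)
Definition HilbPt (p q m : nat) (I : Pol -> Prop) : Prop :=
  [/\ is_ideal I, I (heq p q), G_stable p q m I & hilb_one p q m I].

Definition invariant (p q m : nat) (f : Pol) : Prop :=
  forall t z, inG m t z -> act p q t z f = f.

(* Hilbert-Chow morphism: [Z] |-> the (maximal) ideal I_Z /\ C[X]^G of the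
   invariant ring, i.e. the point of the quotient E_{l,m}. *)
Definition gamma (p q m : nat) (I : Pol -> Prop) : Pol -> Prop :=
  fun f => invariant p q m f /\ I f.

(* eta_{-p,-1}: the kernel line {s1 X1 + s2 X2 in I_Z} of F_{-p,-1} -> C[Z]
   (this kernel determines the quotient F_{-p,-1}/Ker in Gr(1, F^vee) = P^1). *)
Definition eta_m (I : Pol -> Prop) : CC * CC -> Prop :=
  fun s => I (s.1 *: X 1 + s.2 *: X 2).

Definition eta_q (I : Pol -> Prop) : CC * CC -> Prop :=
  fun s => I (s.1 *: X 3 + s.2 *: X 4).

Definition psi (p q m : nat) (I : Pol -> Prop) :=
  (gamma p q m I, eta_m I, eta_q I).

(* Main.v *)
Require Import Defs.
From HB Require Import structures.
From mathcomp Require Import all_boot all_algebra all_solvable all_field.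
From mathcomp Require Import reals Rstruct complex.
From mathcomp Require Import mpoly.
From mathcomp Require Import ring order zify.
From Stdlib Require Import FunctionalExtensionality PropExtensionality.
Set Implicit Arguments.
Unset Strict Implicit.
Unset Printing Implicit Defensive.
Import Order.TTheory GRing.Theory Num.Theory.
Local Open Scope ring_scope.

Section Ideals.
Variable L : Pol -> Prop.
Hypothesis iL : is_ideal L.

Lemma id0 : L 0. Proof. by case: iL. Qed.
Lemma idD a b : L a -> L b -> L (a + b). Proof. by case: iL => _ h _; apply: h. Qed.
Lemma idMl r a : L a -> L (r * a). Proof. by case: iL => _ _ h; apply: h. Qed.
Lemma idMr r a : L a -> L (a * r). Proof. by rewrite mulrC; apply: idMl. Qed.
Lemma idN a : L a -> L (- a).
Proof. by move=> h; rewrite -mulN1r; apply: idMl. Qed.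
Lemma idB a b : L a -> L b -> L (a - b).
Proof. by move=> ha hb; apply: idD => //; apply: idN. Qed.
Lemma idZ c a : L a -> L (c *: a).
Proof. by move=> h; rewrite -mul_mpolyC; apply: idMl. Qed.
Lemma id_sum (T : Type) (s : seq T) (P : pred T) (F : T -> Pol) :
  (forall x, P x -> L (F x)) -> L (\sum_(x <- s | P x) F x).
Proof.
move=> h; elim/big_rec: _ => [|x y Px Ly]; first exact: id0.
by apply: idD => //; apply: h.
Qed.

Definition cong f g := L (f - g).
Lemma cong_refl f : cong f f. Proof. by rewrite /cong subrr; exact: id0. Qed.
Lemma cong_sym f g : cong f g -> cong g f.
Proof. by move=> h; rewrite /cong -opprB; apply: idN. Qed.
Lemma cong_trans f g h : cong f g -> cong g h -> cong f h.
Proof. by move=> a b; have := idD a b; rewrite /cong addrA subrK. Qed.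
Lemma congD f f' g g' : cong f f' -> cong g g' -> cong (f + g) (f' + g').
Proof. by move=> a b; have := idD a b; rewrite /cong; congr L; ring. Qed.
Lemma congM f f' g g' : cong f f' -> cong g g' -> cong (f * g) (f' * g').
Proof.
move=> a b; have := idD (idMr g a) (idMl f' b); rewrite /cong; congr L; ring.
Qed.
Lemma congX f f' n : cong f f' -> cong (f ^+ n) (f' ^+ n).
Proof.
move=> h; elim: n => [|n ih]; first by rewrite !expr0; exact: cong_refl.
by rewrite !exprS; apply: congM.
Qed.
Lemma congZ c f f' : cong f f' -> cong (c *: f) (c *: f').
Proof. by move=> h; rewrite /cong -scalerBr; apply: idZ. Qed.
Lemma cong_sum (T : Type) (s : seq T) (P : pred T) (F G : T -> Pol) :
  (forall x, P x -> cong (F x) (G x)) ->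
  cong (\sum_(x <- s | P x) F x) (\sum_(x <- s | P x) G x).
Proof.
move=> h; elim/big_rec2: _ => [|x y1 y2 Px c]; first exact: cong_refl.
by apply: congD => //; apply: h.
Qed.
Lemma cong0 f : cong f 0 <-> L f.
Proof. by rewrite /cong subr0. Qed.
End Ideals.

Section Act.
Variables (p q : nat) (t z : CC).
Local Notation act := (act p q t z).
Lemma actD f g : act (f + g) = act f + act g.
Proof. by rewrite /act raddfD. Qed.
Lemma actB f g : act (f - g) = act f - act g.
Proof. by rewrite /act raddfB. Qed.
Lemma actM f g : act (f * g) = act f * act g.
Proof. by rewrite /act rmorphM. Qed.
Lemma actZ c f : act (c *: f) = c *: act f.
Proof. by rewrite /act linearZ. Qed.
Lemma actX f n : act (f ^+ n) = act f ^+ n.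
Proof. by rewrite /act rmorphXn. Qed.
Lemma act1 : act 1 = 1.
Proof. by rewrite /act rmorph1. Qed.
Lemma actC c : act c%:MP = c%:MP.
Proof. by rewrite /act comp_mpolyC. Qed.
Lemma act_sum (T : Type) (s : seq T) (P : pred T) (F : T -> Pol) :
  act (\sum_(x <- s | P x) F x) = \sum_(x <- s | P x) act (F x).
Proof. by rewrite /act raddf_sum. Qed.
Lemma actXi i : (i < 5)%N -> act (X i) = lam p q t z (inord i) *: X i.
Proof.
move=> hi; rewrite /act /X comp_mpolyXU -tnth_nth tnth_mktuple //.
Qed.
End Act.
Section Artin.
Variables (p q m : nat).
Local Notation act := (act p q).
Definition semi (h : Pol) (ch : CC -> CC -> CC) :=
  forall t z, inG m t z -> act t z h = ch t z *: h.
Definition sep (c1 c2 : CC -> CC -> CC) :=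
  exists t z, inG m t z /\ c1 t z != c2 t z.

Lemma act_semi_sum (T : eqType) (s : seq T) (c : T -> CC) h ch t z :
  inG m t z -> (forall y, y \in s -> semi (h y) (ch y)) ->
  act t z (\sum_(y <- s) c y *: h y) = \sum_(y <- s) (c y * ch y t z) *: h y.
Proof.
move=> hg hs; rewrite act_sum big_seq [RHS]big_seq; apply: eq_bigr => y hy.
by rewrite actZ (hs y hy _ _ hg) scalerA.
Qed.

Lemma artin (T : eqType) (L : Pol -> Prop) (s : seq T) (c : T -> CC) h ch c0 :
  is_ideal L -> G_stable p q m L ->
  (forall y, y \in s -> semi (h y) (ch y)) ->
  (forall y, y \in s -> sep (ch y) c0) ->
  (forall t z, inG m t z -> L (act t z (\sum_(y <- s) c y *: h y)
                              - c0 t z *: (\sum_(y <- s) c y *: h y))) ->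
  L (\sum_(y <- s) c y *: h y).
Proof.
move=> iL GS; elim: s c => [|x s IH] c Hs Hsep Hw; first by rewrite big_nil; exact: id0.
have [t0 [z0 [g0 ne]]] := Hsep x (mem_head _ _).
set a := ch x t0 z0; set b := c0 t0 z0.
set F := \sum_(y <- x :: s) c y *: h y.
have Hs' : forall y, y \in s -> semi (h y) (ch y).
  by move=> y hy; apply: Hs; rewrite in_cons hy orbT.
have eF : act t0 z0 F - a *: F = \sum_(y <- s) (c y * (ch y t0 z0 - a)) *: h y.
  rewrite /F (@act_semi_sum _ _ _ _ _ _ _ g0 Hs) scaler_sumr -sumrB big_cons.
  rewrite scalerA -scalerBl /a (mulrC (ch x _ _)) subrr scale0r add0r.
  by apply: eq_bigr => y _; rewrite scalerA -scalerBl; congr (_ *: _); ring.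
have LF' : L (act t0 z0 F - a *: F).
  rewrite eF; apply: IH.
  - by move=> y hy; apply: Hs'.
  - by move=> y hy; apply: Hsep; rewrite in_cons hy orbT.
  move=> t z g; rewrite (@act_semi_sum _ _ _ _ _ _ _ g Hs') scaler_sumr -sumrB.
  have W := Hw t z g; set W0 := act t z _ - _ in W.
  have eW : W0 = \sum_(y <- x :: s) (c y * (ch y t z - c0 t z)) *: h y.
    rewrite /W0 (@act_semi_sum _ _ _ _ _ _ _ g Hs) scaler_sumr -sumrB.
    by apply: eq_bigr => y _; rewrite scalerA -scalerBl; congr (_ *: _); ring.
  have := idB iL (GS _ _ g0 _ W) (idZ iL a W).
  rewrite eW (@act_semi_sum _ _ _ _ _ _ _ g0 Hs) scaler_sumr -sumrB big_cons.
  rewrite /a => HH.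
  congr L: HH; rewrite scalerA -scalerBl.
  have -> : c x * (ch x t z - c0 t z) * ch x t0 z0 - ch x t0 z0 * (c x * (ch x t z - c0 t z)) = 0 by ring.
  rewrite scale0r add0r.
  by apply: eq_bigr => y _; rewrite !scalerA -!scalerBl; congr (_ *: _); ring.
have LF : L (act t0 z0 F - b *: F) by apply: Hw.
have := idB iL LF' LF.
have -> : act t0 z0 F - a *: F - (act t0 z0 F - b *: F) = (b - a) *: F.
  by rewrite scalerBl; ring.
move=> H; have nz : b - a != 0 by rewrite subr_eq0 eq_sym.
have := idZ iL (b - a)^-1 H; rewrite scalerA mulVf // scale1r.
by [].
Qed.
End Artin.
Lemma prod5 (F : 'I_5 -> Pol) :
  \prod_(i < 5) F i = F (inord 0) * F (inord 1) * F (inord 2) * F (inord 3) * F (inord 4).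
Proof.
rewrite !big_ord_recl big_ord0 mulr1 !mulrA.
have -> : (inord 0 : 'I_5) = ord0 by apply: val_inj; rewrite /= inordK.
have -> : (inord 1 : 'I_5) = lift ord0 ord0 by apply: val_inj; rewrite /= inordK.
have -> : (inord 2 : 'I_5) = lift ord0 (lift ord0 ord0) by apply: val_inj; rewrite /= inordK.
have -> : (inord 3 : 'I_5) = lift ord0 (lift ord0 (lift ord0 ord0)) by apply: val_inj; rewrite /= inordK.
have -> // : (inord 4 : 'I_5) = lift ord0 (lift ord0 (lift ord0 (lift ord0 ord0))) by apply: val_inj; rewrite /= inordK.
Qed.

Definition ex (a : 'X_{1.. 5}) (i : nat) : nat := a (inord i).

Lemma mono5 (a : 'X_{1.. 5}) :
  'X_[a] = X 0 ^+ ex a 0 * X 1 ^+ ex a 1 * X 2 ^+ ex a 2 * X 3 ^+ ex a 3 * X 4 ^+ ex a 4.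
Proof. by rewrite mpolyXE_id prod5. Qed.
Section Chars.
Variables (p q m : nat).
Local Notation act := (act p q).
Local Notation semi := (semi p q m).
Definition mu (t z : CC) : CC := (t ^+ p)^-1 * z^-1.
Definition nu (t z : CC) : CC := t ^+ q * z.

Lemma lam0 t z : lam p q t z (inord 0) = t. Proof. by rewrite /lam /= inordK. Qed.
Lemma lam1 t z : lam p q t z (inord 1) = mu t z. Proof. by rewrite /lam /= inordK. Qed.
Lemma lam2 t z : lam p q t z (inord 2) = mu t z. Proof. by rewrite /lam /= inordK. Qed.
Lemma lam3 t z : lam p q t z (inord 3) = nu t z. Proof. by rewrite /lam /= inordK. Qed.
Lemma lam4 t z : lam p q t z (inord 4) = nu t z. Proof. by rewrite /lam /= inordK. Qed.

Lemma semiX0 : semi (X 0) (fun t z => t).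
Proof. by move=> t z _; rewrite actXi // lam0. Qed.
Lemma semiX1 : semi (X 1) mu.
Proof. by move=> t z _; rewrite actXi // lam1. Qed.
Lemma semiX2 : semi (X 2) mu.
Proof. by move=> t z _; rewrite actXi // lam2. Qed.
Lemma semiX3 : semi (X 3) nu.
Proof. by move=> t z _; rewrite actXi // lam3. Qed.
Lemma semiX4 : semi (X 4) nu.
Proof. by move=> t z _; rewrite actXi // lam4. Qed.

Lemma semiM f g c1 c2 : semi f c1 -> semi g c2 -> semi (f * g) (fun t z => c1 t z * c2 t z).
Proof.
move=> h1 h2 t z hg; rewrite actM h1 // h2 //.
by rewrite -scalerAl -scalerAr scalerA mulrC.
Qed.
Lemma semiXn f c n : semi f c -> semi (f ^+ n) (fun t z => c t z ^+ n).
Proof.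
move=> h t z hg; rewrite actX h //.
elim: n => [|n ih]; first by rewrite !expr0 scale1r.
by rewrite !exprS ih -scalerAl -scalerAr scalerA.
Qed.
Lemma semiZ f c a : semi f c -> semi (a *: f) c.
Proof. by move=> h t z hg; rewrite actZ h // !scalerA mulrC. Qed.
Lemma semi_ext f c c' : (forall t z, inG m t z -> c t z = c' t z) -> semi f c -> semi f c'.
Proof. by move=> e h t z hg; rewrite h // e. Qed.
End Chars.
Section Arith.
Variables (p k m : nat).
Hypotheses (hp : (0 < p)%N) (kpos : (0 < k)%N) (cop : coprime p (p + k)) (hm : (0 < m)%N)
  (hk : (k %| m)%N).
Local Notation q := (p + k)%N.
Local Notation m' := (m %/ k)%N.

Lemma mE : m = (m' * k)%N. Proof. by rewrite divnK. Qed.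
Lemma m'_gt0 : (0 < m')%N.
Proof. by rewrite divn_gt0 // dvdn_leq. Qed.

Definition reduced (r : nat * nat * nat) :=
  (r.1.1 < k)%N && ((r.1.2 < q * m')%N || (r.2 < p * m')%N).

Lemma red_uniq_aux a B C a' B' C' :
  reduced (a, B, C) -> reduced (a', B', C') ->
  (a + q * C + p * B' = a' + q * C' + p * B)%N ->
  (C + B' = C' + B %[mod m])%N -> (C' <= C)%N -> (a, B, C) = (a', B', C').
Proof.
move=> /andP[ha hr] /andP[ha' _] H1 H2 le.
have Hk : (C + B' = C' + B %[mod k])%N.
  by rewrite -[LHS](modn_dvdm _ hk) H2 modn_dvdm.
have ea : a = a'.
  have e1 : (C * k + (a + p * (C + B')) = C' * k + (a' + p * (C' + B)))%N.
    move: H1; rewrite !mulnDl !mulnDr; lia.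
  have : ((a + p * (C + B')) = (a' + p * (C' + B)) %[mod k])%N.
    by rewrite -(modnMDl C) e1 modnMDl.
  move=> e2.
  have eXY : (p * (C + B') = p * (C' + B) %[mod k])%N by rewrite -modnMmr Hk modnMmr.
  move: e2; rewrite -modnDmr eXY modnDmr => /eqP; rewrite eqn_modDr => /eqP.
  by rewrite !modn_small.
subst a'.
have H3 : (q * C + p * B' = q * C' + p * B)%N by lia.
have leB : (B' <= B)%N.
  have hq : (q * C' <= q * C)%N := leq_mul (leqnn q) le.
  have : (p * B' <= p * B)%N by lia.
  by rewrite leq_pmul2l.
set D := (C - C')%N; set E := (B - B')%N.
have eC : C = (C' + D)%N by rewrite subnKC.
have eB : B = (B' + E)%N by rewrite subnKC.
have H4 : (q * D = p * E)%N by move: H3; rewrite eC eB !mulnDr; lia.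
have : (p %| D * q)%N by rewrite mulnC H4 dvdn_mulr.
rewrite Gauss_dvdl // => /dvdnP[s eD].
have eE : E = (q * s)%N.
  by apply/eqP; rewrite -(eqn_pmul2l hp) -H4 eD; apply/eqP; ring.
have Hs : (m %| k * s)%N.
  move: H2; rewrite eC eB eD eE => H2.
  have : (p * s + 0 = p * s + k * s %[mod m])%N.
    rewrite addn0; move: H2.
    have -> : (C' + s * p + B' = (C' + B') + p * s)%N by ring.
    have -> : (C' + (B' + (p + k) * s) = (C' + B') + (p * s + k * s))%N by ring.
    by move/eqP; rewrite eqn_modDl => /eqP.
  by move/eqP; rewrite eqn_modDl mod0n eq_sym.
case: (posnP s) => [s0|spos].
  by rewrite eC eB eD eE s0 !muln0 mul0n !addn0.
have : (m' %| s)%N.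
  by move: Hs; rewrite {1}mE (mulnC k) dvdn_pmul2r.
move=> /(dvdn_leq spos) sm.
move: hr; rewrite eC eB eD eE.
have := leq_mul (leqnn p) sm; have := leq_mul (leqnn q) sm => h1 h2.
have : (p * m' <= C' + s * p)%N by lia.
have : (q * m' <= B' + q * s)%N by lia.
by rewrite /= !ltnNge => -> ->.
Qed.

Lemma red_uniq a B C a' B' C' :
  reduced (a, B, C) -> reduced (a', B', C') ->
  (a + q * C + p * B' = a' + q * C' + p * B)%N ->
  (C + B' = C' + B %[mod m])%N -> (a, B, C) = (a', B', C').
Proof.
move=> r1 r2 H1 H2; case: (leqP C' C) => le; first exact: red_uniq_aux.
by symmetry; apply: red_uniq_aux => //; exact: ltnW.
Qed.

Definition redj (r : nat * nat * nat) := (r.1.1 %/ k)%N.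
Definition redu (r : nat * nat * nat) :=
  minn ((r.1.2 + redj r) %/ (q * m')) ((r.2 + redj r) %/ (p * m')).
Definition red (r : nat * nat * nat) : nat * nat * nat :=
  (r.1.1 %% k, r.1.2 + redj r - redu r * (q * m'), r.2 + redj r - redu r * (p * m'))%N.

Lemma modnE' x d : (x - x %/ d * d = x %% d)%N.
Proof. by rewrite {1}(divn_eq x d) addKn. Qed.

Lemma red_reduced r : reduced (red r).
Proof.
rewrite /reduced /red /= ltn_pmod //=.
have qm : (0 < q * m')%N by rewrite muln_gt0 m'_gt0 addn_gt0 hp.
have pm : (0 < p * m')%N by rewrite muln_gt0 m'_gt0 hp.
rewrite /redu; case: (leqP ((r.1.2 + redj r) %/ (q * m')) ((r.2 + redj r) %/ (p * m'))) => h.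
  by rewrite modnE' ltn_pmod.
by rewrite orbC modnE' ltn_pmod.
Qed.
End Arith.
Lemma cancel_pow (x A u : CC) (B B' : nat) : x != 0 ->
  A * (x^-1) ^+ B = u * (x^-1) ^+ B' -> A * x ^+ B' = u * x ^+ B.
Proof.
move=> hx e.
have hB : x ^+ B != 0 by rewrite expf_neq0.
have hB' : x ^+ B' != 0 by rewrite expf_neq0.
move: e; rewrite !exprVn => e.
have := congr1 (fun w => w * x ^+ B * x ^+ B') e.
rewrite -!mulrA (mulrA (x ^+ B)^-1) mulVf // mul1r.
rewrite (mulrC (x ^+ B)) !mulrA mulfVK //.

Qed.
Lemma exp2_inj (a b : nat) : (2 : CC) ^+ a = 2 ^+ b -> a = b.
Proof.
move=> e; have h2 : (1 : CC) < 2 by rewrite ltr1n.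
case: (ltngtP a b) => // h.
  by move: h; rewrite -(ltr_eXn2l h2) e ltxx.
by move: h; rewrite -(ltr_eXn2l h2) e ltxx.
Qed.

Section Sep.
Variables (p k m : nat).
Hypotheses (hp : (0 < p)%N) (kpos : (0 < k)%N) (cop : coprime p (p + k)) (hm : (0 < m)%N)
  (hk : (k %| m)%N).
Variable zeta : CC.
Hypothesis hz : m.-primitive_root zeta.

Definition chr (r : nat * nat * nat) (t z : CC) :=
  t ^+ r.1.1 * mu p t z ^+ r.1.2 * nu (p + k) t z ^+ r.2.

Lemma inG2 : inG m 2 1.
Proof. by split; [rewrite pnatr_eq0 | rewrite expr1n]. Qed.
Lemma inGz : inG m 1 zeta.
Proof. by split; [rewrite oner_neq0 | rewrite prim_expr_order]. Qed.

Lemma chr_sep r r' : reduced p k m r -> reduced p k m r' -> r != r' ->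
  sep m (chr r) (chr r').
Proof.
case: r => [[a B] C]; case: r' => [[a' B'] C'] hr hr' ne.
case E1: (chr (a, B, C) 2 1 == chr (a', B', C') 2 1); last first.
  by exists 2, 1; rewrite E1; split => //; exact: inG2.
case E2: (chr (a, B, C) 1 zeta == chr (a', B', C') 1 zeta); last first.
  by exists 1, zeta; rewrite E2; split => //; exact: inGz.
exfalso; move/eqP: ne; apply; apply: (red_uniq hp kpos cop hm hk hr hr').
  move/eqP: E1; rewrite /chr /mu /nu /= invr1 !mulr1.
  set x := (2 : CC) ^+ p; set y := (2 : CC) ^+ (p + k).
  rewrite -!mulrA (mulrC ((x^-1) ^+ B)) (mulrC ((x^-1) ^+ B')) !mulrA.
  move/cancel_pow; rewrite expf_neq0 ?pnatr_eq0 // => /(_ isT).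
  rewrite /x /y -!exprM -!exprD; exact: exp2_inj.
move/eqP: E2; rewrite /chr /mu /nu /= !expr1n invr1 !mul1r.
rewrite (mulrC _ (zeta ^+ C)) (mulrC _ (zeta ^+ C')).
move/cancel_pow; rewrite (prim_root_eq0 hz) -lt0n hm => /(_ isT).
by rewrite -!exprD => /eqP; rewrite (eq_prim_root_expr hz) => /eqP.
Qed.
End Sep.
Lemma group_sum (T U : eqType) (l : seq T) (rh : T -> U) (F : T -> CC) (G : U -> Pol) :
  \sum_(x <- l) F x *: G (rh x) =
  \sum_(r <- undup (map rh l)) (\sum_(x <- l | rh x == r) F x) *: G r.
Proof.
transitivity (\sum_(r <- undup (map rh l)) \sum_(x <- l) (if rh x == r then F x *: G (rh x) else 0)); last first.
  apply: eq_big => // r _; rewrite scaler_suml [RHS]big_mkcond /=.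
  by apply: eq_big => // x _; case: ifP => // /eqP ->.
rewrite exchange_big /= [LHS]big_seq [RHS]big_seq; apply: eq_bigr => x hx.
have hr : rh x \in undup (map rh l) by rewrite mem_undup map_f.
rewrite (bigD1_seq _ hr (undup_uniq _)) /= eqxx big1 ?addr0 //.
by move=> r /negbTE; rewrite eq_sym => ->.
Qed.

Section Main.
Variables (p k m : nat).
Hypotheses (hp : (0 < p)%N) (kpos : (0 < k)%N) (cop : coprime p (p + k)) (hm : (0 < m)%N)
  (hk : (k %| m)%N).
Local Notation q := (p + k)%N.
Local Notation m' := (m %/ k)%N.
Variables (s1 s2 s3 s4 pi : CC).
Hypotheses (ns12 : (s1 != 0) || (s2 != 0)) (ns34 : (s3 != 0) || (s4 != 0)).

Definition Y := if s2 != 0 then X 1 else X 2.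
Definition a1 : CC := if s2 != 0 then 1 else 0.
Definition a2 : CC := if s2 != 0 then - s1 / s2 else 1.
Definition Z := if s4 != 0 then X 3 else X 4.
Definition b3 : CC := if s4 != 0 then 1 else 0.
Definition b4 : CC := if s4 != 0 then - s3 / s4 else 1.
Definition cc : CC := a1 * b4 - a2 * b3.
Definition PP := Y ^+ (q * m') * Z ^+ (p * m').
Definition RR (r : nat * nat * nat) := X 0 ^+ r.1.1 * Y ^+ r.1.2 * Z ^+ r.2.

Definition gens (L : Pol -> Prop) :=
  [/\ L (s1 *: X 1 + s2 *: X 2), L (s3 *: X 3 + s4 *: X 4), L (heq p q)
    & L (PP - pi%:MP)].

Lemma lin_red (L : Pol -> Prop) (u1 u2 : CC) (V1 V2 : Pol) : is_ideal L ->
  (u1 != 0) || (u2 != 0) -> L (u1 *: V1 + u2 *: V2) ->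
  cong L V1 ((if u2 != 0 then 1 else 0) *: (if u2 != 0 then V1 else V2)) /\
  cong L V2 ((if u2 != 0 then - u1 / u2 else 1) *: (if u2 != 0 then V1 else V2)).
Proof.
move=> iL nz hl; case: ifP => h2.
  split; first by rewrite scale1r; exact: cong_refl.
  rewrite /cong; have := idZ iL (u2^-1) hl.
  rewrite scalerDr !scalerA mulVf // scale1r; congr L.
  by rewrite mulNr scaleNr opprK addrC mulrC.
move/negbT: h2; rewrite negbK => /eqP h2; subst u2.
rewrite eqxx orbF in nz.
split; last by rewrite scale1r; exact: cong_refl.
rewrite /cong scale0r subr0; have := idZ iL (u1^-1) hl.
by rewrite scale0r addr0 scalerA mulVf // scale1r.
Qed.

Lemma cY L : is_ideal L -> L (s1 *: X 1 + s2 *: X 2) ->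
  cong L (X 1) (a1 *: Y) /\ cong L (X 2) (a2 *: Y).
Proof. by move=> iL hl; exact: lin_red. Qed.
Lemma cZ L : is_ideal L -> L (s3 *: X 3 + s4 *: X 4) ->
  cong L (X 3) (b3 *: Z) /\ cong L (X 4) (b4 *: Z).
Proof. by move=> iL hl; exact: lin_red. Qed.

Lemma cX0k L : is_ideal L -> gens L -> cong L (X 0 ^+ k) (cc *: (Y * Z)).
Proof.
move=> iL [g1 g2 g3 g4]; have [c1 c2] := cY iL g1; have [c3 c4] := cZ iL g2.
have h : cong L (X 0 ^+ k) (X 1 * X 4 - X 2 * X 3).
  by move: g3; rewrite /heq addKn.
apply: (cong_trans iL h).
have e : cc *: (Y * Z) = (a1 *: Y) * (b4 *: Z) - (a2 *: Y) * (b3 *: Z).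
  rewrite -!mul_mpolyC /cc rmorphB !rmorphM /=; ring.
rewrite e; apply: (congD iL (congM iL c1 c4)).
have := idN iL (congM iL c2 c3); rewrite /cong; congr L; ring.
Qed.

Lemma ac_aux (R : comRingType) (x yb yu zc zu yB yj zC zj : R) :
  yB * yj = yb * yu -> zC * zj = zc * zu ->
  yj * zj * (x * yB * zC) = x * yb * zc * (yu * zu).
Proof.
move=> h1 h2; transitivity (x * (yB * yj) * (zC * zj)); first by ring.
by rewrite h1 h2; ring.
Qed.

Lemma cRed L : is_ideal L -> gens L -> forall r,
  cong L (X 0 ^+ r.1.1 * Y ^+ r.1.2 * Z ^+ r.2)
         ((cc ^+ redj k r * pi ^+ redu p k m r) *: RR (red p k m r)).
Proof.
move=> iL g [[a B] C]; have g' := g; case: g' => _ _ _ g4.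
rewrite /red /redj /redu /RR /=.
set j := (a %/ k)%N; set u := minn _ _.
have hu1 : (u * (q * m') <= B + j)%N.
  apply: leq_trans (leq_trunc_div (B + j) (q * m')).
  by rewrite leq_mul2r geq_minl orbT.
have hu2 : (u * (p * m') <= C + j)%N.
  apply: leq_trans (leq_trunc_div (C + j) (p * m')).
  by rewrite leq_mul2r geq_minr orbT.
set B0 := (B + j - _)%N; set C0 := (C + j - _)%N.
have e1 : X 0 ^+ a * Y ^+ B * Z ^+ C = (X 0 ^+ k) ^+ j * (X 0 ^+ (a %% k) * Y ^+ B * Z ^+ C).
  by rewrite {1}(divn_eq a k) exprD -exprM mulnC !mulrA.
have e2 : (Y * Z) ^+ j * (X 0 ^+ (a %% k) * Y ^+ B * Z ^+ C) =
    (X 0 ^+ (a %% k) * Y ^+ B0 * Z ^+ C0) * PP ^+ u.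
  have eB : Y ^+ (B + j) = Y ^+ B0 * (Y ^+ (q * m')) ^+ u.
    by rewrite -exprM mulnC -exprD subnK.
  have eC : Z ^+ (C + j) = Z ^+ C0 * (Z ^+ (p * m')) ^+ u.
    by rewrite -exprM mulnC -exprD subnK.
  rewrite /PP !exprMn; rewrite exprD in eB; rewrite exprD in eC.
  move: eB eC; move: (X 0 ^+ (a %% k)) (Y ^+ B) (Y ^+ j) (Z ^+ C) (Z ^+ j) (Y ^+ B0)
    (Y ^+ (q * m') ^+ u) (Z ^+ C0) (Z ^+ (p * m') ^+ u) => x yB yj zC zj yb yu zc zu h1 h2.
  transitivity (x * (yB * yj) * (zC * zj)); first by ring.
  by rewrite h1 h2; ring.
rewrite e1; apply: (cong_trans iL (congM iL (congX iL j (cX0k iL g)) (cong_refl iL _))).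
rewrite exprZn -scalerAl e2 -scalerA; apply: (congZ iL).
apply: (cong_trans iL (congM iL (cong_refl iL _) (congX iL u g4))).
by rewrite -rmorphXn mulrC mul_mpolyC; exact: cong_refl.
Qed.

Definition coefM (a : 'X_{1.. 5}) : CC :=
  a1 ^+ ex a 1 * a2 ^+ ex a 2 * b3 ^+ ex a 3 * b4 ^+ ex a 4.
Definition rho (a : 'X_{1.. 5}) : nat * nat * nat :=
  (ex a 0, ex a 1 + ex a 2, ex a 3 + ex a 4)%N.

Lemma cMono L : is_ideal L -> gens L -> forall a : 'X_{1.. 5},
  cong L 'X_[a] (coefM a *: (X 0 ^+ (rho a).1.1 * Y ^+ (rho a).1.2 * Z ^+ (rho a).2)).
Proof.
move=> iL [g1 g2 _ _] a; have [c1 c2] := cY iL g1; have [c3 c4] := cZ iL g2.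
rewrite mono5.
apply: (cong_trans iL (congM iL (congM iL (congM iL (congM iL (cong_refl iL _)
   (congX iL _ c1)) (congX iL _ c2)) (congX iL _ c3)) (congX iL _ c4))).
rewrite /coefM /rho /= !exprZn !exprD -!mul_mpolyC !rmorphM /=.
move: (X 0 ^+ ex a 0) (Y ^+ ex a 1) (Y ^+ ex a 2) (Z ^+ ex a 3) (Z ^+ ex a 4)
  (a1 ^+ ex a 1)%:MP (a2 ^+ ex a 2)%:MP (b3 ^+ ex a 3)%:MP (b4 ^+ ex a 4)%:MP.
move=> x y1 y2 z3 z4 u1 u2 u3 u4.
have -> : x * (u1 * y1) * (u2 * y2) * (u3 * z3) * (u4 * z4) =
  u1 * u2 * u3 * u4 * (x * (y1 * y2) * (z3 * z4)) by ring.
exact: cong_refl.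
Qed.

Definition rr (a : 'X_{1.. 5}) := red p k m (rho a).
Definition kap (f : Pol) (a : 'X_{1.. 5}) : CC :=
  f@_a * (coefM a * (cc ^+ redj k (rho a) * pi ^+ redu p k m (rho a))).
Definition UU (f : Pol) := undup (map rr (msupp f)).
Definition KK (f : Pol) (r : nat * nat * nat) := \sum_(a <- msupp f | rr a == r) kap f a.
Definition NF (f : Pol) := \sum_(r <- UU f) KK f r *: RR r.

Lemma nf_cong L : is_ideal L -> gens L -> forall f, cong L f (NF f).
Proof.
move=> iL g f; rewrite {1}(mpolyE f) /NF /UU /KK -group_sum.
apply: (cong_sum iL) => a _; rewrite /kap -scalerA; apply: (congZ iL).
apply: (cong_trans iL (cMono iL g a)); rewrite -scalerA; apply: (congZ iL).
exact: (cRed iL g (rho a)).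
Qed.

Lemma UU_reduced f r : r \in UU f -> reduced p k m r.
Proof. by rewrite /UU mem_undup => /mapP[a _ ->]; exact: red_reduced. Qed.

Lemma semiY : semi p q m Y (mu p).
Proof. by rewrite /Y; case: ifP => _; [exact: semiX1 | exact: semiX2]. Qed.
Lemma semiZ' : semi p q m Z (nu q).
Proof. by rewrite /Z; case: ifP => _; [exact: semiX3 | exact: semiX4]. Qed.
Lemma semiRR r : semi p q m (RR r) (chr p k r).
Proof.
move=> t z g; rewrite /RR !actM !actX (semiX0 p q g) (semiY g) (semiZ' g) !exprZn.
rewrite -!scalerAl -!scalerAr !scalerA /chr -scalerAl scalerA; congr (_ *: _); ring.
Qed.

Lemma sep_ext c1 c2 c2' : sep m c1 c2 -> (forall t z, inG m t z -> c2 t z = c2' t z) ->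
  sep m c1 c2'.
Proof. by move=> [t [z [g ne]]] e; exists t, z; split => //; rewrite -e. Qed.

Variable zeta : CC.
Hypothesis hz : m.-primitive_root zeta.

Lemma kill L (U : seq (nat * nat * nat)) (K : nat * nat * nat -> CC) r0 c0 :
  is_ideal L -> G_stable p q m L ->
  (forall r, r \in U -> reduced p k m r) -> reduced p k m r0 ->
  (forall t z, inG m t z -> chr p k r0 t z = c0 t z) ->
  (forall t z, inG m t z -> L (act p q t z (\sum_(r <- U) K r *: RR r)
                                - c0 t z *: (\sum_(r <- U) K r *: RR r))) ->
  L (\sum_(r <- U | r != r0) K r *: RR r).
Proof.
move=> iL GS hU hr0 ec0 hN.
rewrite -big_filter; apply: (@artin p q m _ L _ K RR (chr p k) c0 iL GS).
- by move=> y _; exact: semiRR.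
- move=> y; rewrite mem_filter => /andP[ne hy].
  apply: sep_ext ec0; exact: (chr_sep hp kpos cop hm hk hz (hU y hy) hr0 ne).
move=> t z g; rewrite big_filter.
have := hN t z g; rewrite (bigID (fun r => r == r0)) /=.
set E := \sum_(r <- U | r == r0) _; set F := \sum_(r <- U | r != r0) _.
have eE : act p q t z E = c0 t z *: E.
  rewrite /E act_sum scaler_sumr; apply: eq_bigr => r /eqP ->.
  by rewrite actZ semiRR // ec0 // !scalerA mulrC.
rewrite actD eE scalerDr; congr L; ring.
Qed.
End Main.
Lemma inw_cong p q m L n d f g : is_ideal L -> G_stable p q m L -> cong L f g ->
  in_weight p q m L n d f ->
  forall t z, inG m t z -> L (act p q t z g - chi n d t z *: g).
Proof.
move=> iL GS c w t z hg.
have := idD iL (idB iL (w t z hg) (GS t z hg _ c)) (idZ iL (chi n d t z) c).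
rewrite actB scalerBr.
move: (act p q t z f) (act p q t z g) (chi n d t z *: f) (chi n d t z *: g) => A A' Sf Sg.
congr L; ring.
Qed.

Lemma inG_z m t z : (0 < m)%N -> inG m t z -> z != 0.
Proof.
move=> hm [_ hz]; apply/eqP => z0; move: hz; rewrite z0 expr0n.
by case: m hm => //= m' _ /eqP; rewrite eq_sym oner_eq0.
Qed.

Lemma chi_chr p k m (a B C : nat) t z : (0 < m)%N -> inG m t z ->
  chi ((a + (p + k) * C)%:Z - (p * B)%:Z) (C%:Z - B%:Z) t z = chr p k (a, B, C) t z.
Proof.
move=> hm g; have tn : t != 0 by case: g.
have zn := inG_z hm g.
rewrite /chi /chr /mu /nu /= !expfzDr // -!exprz_inv.
have -> : (t ^ ((a + (p + k) * C)%N)) = t ^+ (a + (p + k) * C) by [].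
have -> : ((t^-1) ^ ((p * B)%N)) = (t^-1) ^+ (p * B) by [].
have -> : (z ^ C) = z ^+ C by [].
have -> : ((z^-1) ^ B) = (z^-1) ^+ B by [].
rewrite exprD !exprM !exprMn exprVn -exprVn; ring.
Qed.

Section Main2.
Variables (p k m : nat).
Hypotheses (hp : (0 < p)%N) (kpos : (0 < k)%N) (cop : coprime p (p + k)) (hm : (0 < m)%N)
  (hk : (k %| m)%N).
Local Notation q := (p + k)%N.
Variables (s1 s2 s3 s4 pi : CC).
Hypotheses (ns12 : (s1 != 0) || (s2 != 0)) (ns34 : (s3 != 0) || (s4 != 0)).
Variable zeta : CC.
Hypothesis hz : m.-primitive_root zeta.
Local Notation gens := (gens p k m s1 s2 s3 s4 pi).
Local Notation NF := (NF p k m s1 s2 s3 s4 pi).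
Local Notation KK := (KK p k m s1 s2 s3 s4 pi).
Local Notation UU := (UU p k m).
Local Notation RR := (RR s2 s4).

Lemma notin I : HilbPt p q m I -> gens I -> forall r0, reduced p k m r0 -> ~ I (RR r0).
Proof.
move=> [iI hI GS hilb] g [[a B] C] hr0 hin.
have [f [wf nf _]] := hilb ((a + q * C)%:Z - (p * B)%:Z) (C%:Z - B%:Z).
have cf := nf_cong ns12 ns34 iI g f.
have hN := inw_cong iI GS cf wf.
have HF := kill hp kpos cop hm hk hz iI GS (UU_reduced hp kpos hm hk (f:=f)) hr0
  (fun t z g => esym (@chi_chr p k m a B C t z hm g)) hN.
have HE : I (\sum_(r <- UU f | r == (a, B, C)) KK f r *: RR r).
  by apply: (id_sum iI) => r /eqP ->; apply: idZ.
have IN : I (NF f) by rewrite /NF (bigID (fun r => r == (a, B, C))) /=; apply: idD.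
apply: nf; have := idD iI cf IN; by rewrite subrK.
Qed.

Lemma incl I J : HilbPt p q m I -> gens I -> gens J -> is_ideal J ->
  forall f, I f -> J f.
Proof.
move=> HI g gJ iJ f hf; have [iI hI GS hilb] := HI.
have cf := nf_cong ns12 ns34 iI g f.
have IN : I (NF f) by have := idB iI hf cf; rewrite opprB addrC subrK.
have K0 : forall r0, r0 \in UU f -> KK f r0 = 0.
  move=> r0 hr0.
  have HF := kill hp kpos cop hm hk hz (c0 := chr p k r0) iI GS
    (UU_reduced hp kpos hm hk (f:=f)) (UU_reduced hp kpos hm hk hr0)
    (fun t z g => erefl) (fun t z g => idB iI (GS t z g _ IN) (idZ iI _ IN)).
  have HE : I (\sum_(r <- UU f | r == r0) KK f r *: RR r).
    have := idB iI IN HF; rewrite /NF (bigID (fun r => r == r0)) /=.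
    by rewrite addrK.
  move: HE; rewrite -big_filter.
  have -> : [seq r <- UU f | r == r0] = [:: r0].
    by apply: filter_pred1_uniq => //; exact: undup_uniq.
  rewrite big_seq1 => HE.
  apply/eqP; apply/negP => /negP nz.
  apply: (notin HI g (UU_reduced hp kpos hm hk hr0)).
  by have := idZ iI (KK f r0)^-1 HE; rewrite scalerA mulVf // scale1r.
have N0 : NF f = 0.
  by rewrite /NF big_seq big1 // => r hr; rewrite K0 // scale0r.
have := nf_cong ns12 ns34 iJ gJ f; by rewrite /cong N0 subr0.
Qed.
End Main2.
Section Extract.
Variables (p k m : nat).
Hypotheses (hp : (0 < p)%N) (kpos : (0 < k)%N) (hm : (0 < m)%N) (hk : (k %| m)%N).
Local Notation q := (p + k)%N.

Definition chM (a : 'X_{1.. 5}) (t z : CC) :=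
  t ^+ ex a 0 * mu p t z ^+ ex a 1 * mu p t z ^+ ex a 2 * nu q t z ^+ ex a 3 * nu q t z ^+ ex a 4.

Lemma semiMono a : semi p q m 'X_[a] (chM a).
Proof.
move=> t z g; rewrite mono5 !actM !actX (semiX0 p q g) (semiX1 p q g) (semiX2 p q g).
rewrite (semiX3 p q g) (semiX4 p q g) !exprZn /chM.
move: (X 0 ^+ ex a 0) (X 1 ^+ ex a 1) (X 2 ^+ ex a 2) (X 3 ^+ ex a 3) (X 4 ^+ ex a 4).
move: (t ^+ ex a 0) (mu p t z ^+ ex a 1) (mu p t z ^+ ex a 2) (nu q t z ^+ ex a 3) (nu q t z ^+ ex a 4).
move=> c0 c1 c2 c3 c4 x0 x1 x2 x3 x4.
rewrite -!mul_mpolyC !rmorphM /=; ring.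
Qed.

Lemma deg_contra I n d f (P : pred 'X_{1.. 5}) :
  is_ideal I -> G_stable p q m I -> in_weight p q m I n d f -> ~ I f ->
  (forall a, P a -> sep m (chM a) (chi n d)) -> (forall a, ~~ P a -> I 'X_[a]) -> False.
Proof.
move=> iI GS w nf hsep hout; apply: nf.
set S := \sum_(a <- msupp f | P a) f@_a *: 'X_[a].
have cS : cong I f S.
  rewrite /cong {1}(mpolyE f) (bigID P) /= addrAC subrr add0r.
  by apply: (id_sum iI) => a /hout ha; apply: idZ.
have hS := inw_cong iI GS cS w.
have IS : I S.
  rewrite /S -big_filter; apply: (artin (c0 := chi n d) iI GS).
  - by move=> a _; exact: semiMono.
  - by move=> a; rewrite mem_filter => /andP[/hsep].
  by rewrite big_filter.
by have := idD iI cS IS; rewrite subrK.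
Qed.

Lemma act_PP s2 s4 t z : inG m t z -> act p q t z (PP p k m s2 s4) = PP p k m s2 s4.
Proof.
move=> g; rewrite /PP actM !actX (semiY p k s2 g) (semiZ' p k s4 g) !exprZn.
rewrite -scalerAl -scalerAr scalerA.
have -> : mu p t z ^+ (q * (m %/ k)) * nu q t z ^+ (p * (m %/ k)) = 1.
  have tn : t != 0 by case: g.
  have zn := inG_z hm g.
  have zm : z ^+ m = 1 by case: g.
  rewrite /mu /nu !exprMn !exprVn.
  have e1 : (t ^+ p) ^+ (q * (m %/ k)) = (t ^+ q) ^+ (p * (m %/ k)).
    by rewrite -!exprM mulnA (mulnC p q) -mulnA.
  have e2 : z ^+ (q * (m %/ k)) = z ^+ (p * (m %/ k)).
    by rewrite mulnDl exprD (mulnC k) divnK // zm mulr1.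
  rewrite e1 e2.
  have h1 : (t ^+ q) ^+ (p * (m %/ k)) != 0 by rewrite !expf_neq0.
  have h2 : z ^+ (p * (m %/ k)) != 0 by rewrite expf_neq0.
  by rewrite -invfM mulVf // mulf_neq0.
by rewrite scale1r.
Qed.

Lemma get_pi I P0 : HilbPt p q m I -> (forall t z, inG m t z -> act p q t z P0 = P0) ->
  exists pi : CC, I (P0 - pi%:MP).
Proof.
move=> [iI _ _ hilb] hP.
have [f [wf nf hall]] := hilb 0 0.
have w1 : in_weight p q m I 0 0 1.
  by move=> t z g; rewrite act1 /chi !expr0z mul1r scale1r subrr; exact: id0 iI.
have w2 : in_weight p q m I 0 0 P0.
  by move=> t z g; rewrite hP // /chi !expr0z mul1r scale1r subrr; exact: id0 iI.
have [c hc] := hall 1 w1.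
have [c' hc'] := hall P0 w2.
have cn : c != 0.
  apply/eqP => c0; apply: nf; move: hc; rewrite c0 scale0r subr0 => h1.
  by rewrite -[f]mul1r; apply: idMr.
exists (c' / c).
have := idB iI hc' (idZ iI (c' / c) hc).
rewrite scalerBr scalerA mulfVK // -[(c' / c) *: 1]mul_mpolyC mulr1.
by move: (c' *: f) ((c' / c)%:MP) => w u; congr I; ring.
Qed.
End Extract.
Section Extract2.
Variables (p k m : nat).
Hypotheses (hp : (0 < p)%N) (kpos : (0 < k)%N) (hm : (0 < m)%N) (hk : (k %| m)%N).
Local Notation q := (p + k)%N.

Lemma powS_in I (iI : is_ideal I) x n : I x -> (0 < n)%N -> I (x ^+ n).
Proof. by move=> h; case: n => // n _; rewrite exprS; apply: (idMr iI). Qed.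

Lemma lin_from I f c1 c2 :
  is_ideal I -> I (X 1 - c1 *: f) -> I (X 2 - c2 *: f) ->
  I (c2 *: X 1 + (- c1) *: X 2).
Proof.
move=> iI h1 h2; have := idB iI (idZ iI c2 h1) (idZ iI c1 h2).
rewrite !scalerBr !scalerA mulrC scaleNr.
by move: (c2 *: X 1) (c1 *: X 2) ((c1 * c2) *: f) => u v w; congr I; ring.
Qed.

Lemma lin_from' I f c1 c2 :
  is_ideal I -> I (X 3 - c1 *: f) -> I (X 4 - c2 *: f) ->
  I (c2 *: X 3 + (- c1) *: X 4).
Proof.
move=> iI h1 h2; have := idB iI (idZ iI c2 h1) (idZ iI c1 h2).
rewrite !scalerBr !scalerA mulrC scaleNr.
by move: (c2 *: X 3) (c1 *: X 4) ((c1 * c2) *: f) => u v w; congr I; ring.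
Qed.

Lemma get_s12 I : HilbPt p q m I ->
  exists s1 s2 : CC, ((s1 != 0) || (s2 != 0)) /\ I (s1 *: X 1 + s2 *: X 2).
Proof.
move=> [iI hI GS hilb].
have [f [wf nf hall]] := hilb (- (p%:Z)) (-1).
have chim : forall t z, inG m t z -> chi (- (p%:Z)) (-1) t z = mu p t z.
  by move=> t z g; rewrite /chi /mu -exprz_inv exprN1 -exprVn.
have w1 : in_weight p q m I (- (p%:Z)) (-1) (X 1).
  by move=> t z g; rewrite (semiX1 p q g) chim // subrr; exact: id0 iI.
have w2 : in_weight p q m I (- (p%:Z)) (-1) (X 2).
  by move=> t z g; rewrite (semiX2 p q g) chim // subrr; exact: id0 iI.
have [c1 h1] := hall _ w1; have [c2 h2] := hall _ w2.
case: (boolP ((c2 != 0) || (- c1 != 0))) => nz.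
  by exists c2, (- c1); split => //; exact: lin_from h1 h2.
exfalso; move: nz; rewrite negb_or !negbK oppr_eq0 => /andP[/eqP e2 /eqP e1].
move: h1 h2; rewrite e1 e2 !scale0r !subr0 => h1 h2.
apply: (deg_contra (P := fun a => (ex a 1 == 0%N) && (ex a 2 == 0%N)) iI GS wf nf).
  move=> a /andP[/eqP a1 /eqP a2]; exists 2, 1; split; first exact: inG2.
  rewrite chim; last exact: inG2.
  rewrite /chM a1 a2 !expr0 !mulr1 /mu /nu !invr1 !mulr1.
  apply/eqP => e.
  have : (2 : CC) ^+ (ex a 0 + (p + k) * ex a 3 + (p + k) * ex a 4 + p) = 2 ^+ 0.
    rewrite !exprD !exprM e mulVf // expf_neq0 //.
    by rewrite pnatr_eq0.
  move/exp2_inj/eqP; rewrite addn_eq0 => /andP[_ /eqP p0].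
  by move: hp; rewrite p0.
move=> a; rewrite negb_and -!lt0n => /orP[] hpos; rewrite mono5.
  by apply: (idMr iI); apply: (idMr iI); apply: (idMr iI); apply: (idMl iI); apply: (powS_in iI).
by apply: (idMr iI); apply: (idMr iI); apply: (idMl iI); apply: (powS_in iI).
Qed.
End Extract2.

Section Extract3.
Variables (p k m : nat).
Hypotheses (hp : (0 < p)%N) (kpos : (0 < k)%N) (hm : (0 < m)%N) (hk : (k %| m)%N).
Local Notation q := (p + k)%N.

Lemma get_s34 I : HilbPt p q m I ->
  exists s3 s4 : CC, ((s3 != 0) || (s4 != 0)) /\ I (s3 *: X 3 + s4 *: X 4).
Proof.
move=> [iI hI GS hilb].
have [f [wf nf hall]] := hilb (q%:Z) 1.
have chiq : forall t z, inG m t z -> chi (q%:Z) 1 t z = nu q t z by [].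
have w1 : in_weight p q m I (q%:Z) 1 (X 3).
  by move=> t z g; rewrite (semiX3 p q g) chiq // subrr; exact: id0 iI.
have w2 : in_weight p q m I (q%:Z) 1 (X 4).
  by move=> t z g; rewrite (semiX4 p q g) chiq // subrr; exact: id0 iI.
have [c1 h1] := hall _ w1; have [c2 h2] := hall _ w2.
case: (boolP ((c2 != 0) || (- c1 != 0))) => nz.
  by exists c2, (- c1); split => //; exact: lin_from' h1 h2.
exfalso; move: nz; rewrite negb_or !negbK oppr_eq0 => /andP[/eqP e2 /eqP e1].
move: h1 h2; rewrite e1 e2 !scale0r !subr0 => h3 h4.
have h0 : I (X 0 ^+ k).
  have := idD iI hI (idB iI (idMl iI (X 1) h4) (idMl iI (X 2) h3)).
  by rewrite /heq addKn subrK.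
apply: (deg_contra (P := fun a => [&& ex a 3 == 0%N, ex a 4 == 0%N & (ex a 0 < k)%N])
   iI GS wf nf).
  move=> a /and3P[/eqP a3 /eqP a4 a0]; exists 2, 1; split; first exact: inG2.
  rewrite chiq; last exact: inG2.
  rewrite /chM a3 a4 !expr0 !mulr1 /mu /nu !invr1 !mulr1.
  apply/eqP => e.
  have : (2 : CC) ^+ (ex a 0) = 2 ^+ ((p + k) + p * ex a 1 + p * ex a 2).
    have h2 : (2 : CC) ^+ p != 0 by rewrite expf_neq0 // pnatr_eq0.
    rewrite [in RHS]exprD [in RHS]exprD !exprM -e !exprVn.
    have h5 : (2 : CC) ^+ p ^+ ex a 1 != 0 by rewrite expf_neq0.
    have h6 : (2 : CC) ^+ p ^+ ex a 2 != 0 by rewrite expf_neq0.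
    move: h5 h6; move: (2 ^+ p ^+ ex a 1) (2 ^+ p ^+ ex a 2) ((2 : CC) ^+ ex a 0) => u v w hu hv.
    by field; rewrite hu hv.
  move/exp2_inj => ee; move: a0; rewrite ee.
  lia.
move=> a; rewrite !negb_and -!lt0n subn_gt0 ltnS => /or3P[] hpos; rewrite mono5.
- by apply: (idMr iI); apply: (idMl iI); apply: (powS_in iI).
- by apply: (idMl iI); apply: (powS_in iI).
do 4 apply: (idMr iI).
by rewrite -(subnKC hpos) exprD; apply: (idMr iI).
Qed.
End Extract3.

Lemma CC_prim n : (n > 0)%N -> {z : CC | n.-primitive_root z}.
Proof.
pose p : {poly CC} := 'X^n - 1; have [r Dp] := closed_field_poly_normal p.
move=> n_gt0; apply/sigW; rewrite (monicP _) ?monicXnsubC // scale1r in Dp.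
have rn1: all n.-unity_root r by apply/allP=> z; rewrite -root_prod_XsubC -Dp.
have sz_r: (n < (size r).+1)%N.
  by rewrite -(size_prod_XsubC r id) -Dp size_XnsubC.
have [|z] := hasP (has_prim_root n_gt0 rn1 _ sz_r); last by exists z.
by rewrite -separable_prod_XsubC -Dp separable_Xn_sub_1 // pnatr_eq0 -lt0n.
Qed.

Local Close Scope ring_scope.

Theorem lemma6p3 (p q m : nat) :
  0 < p -> p <= q -> coprime p q -> 0 < m -> (q - p) %| m ->
  forall I J : {mpoly CC[5]} -> Prop,
    HilbPt p q m I -> HilbPt p q m J ->
    psi p q m I = psi p q m J -> I = J.
Proof.
move=> hp hpq cop hm hk I J HI HJ E.
have [k ek] : {k | q = (p + k)%N} by exists (q - p)%N; rewrite subnKC.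
subst q; rewrite addKn in hk.
have kpos : (0 < k)%N.
  by case: (posnP k) => // k0; move: hk hm; rewrite k0 dvd0n => /eqP ->.
have [zeta hz] := CC_prim hm.
rewrite /psi in E; case: E => eg em eq.
have [s1 [s2 [ns12 h12]]] := get_s12 hp HI.
have [s3 [s4 [ns34 h34]]] := get_s34 hp kpos hm hk HI.
have j12 : J (s1 *: X 1 + s2 *: X 2)%R.
  by have := congr1 (fun F => F (s1, s2)) em; rewrite /eta_m /= => <-.
have j34 : J (s3 *: X 3 + s4 *: X 4)%R.
  by have := congr1 (fun F => F (s3, s4)) eq; rewrite /eta_q /= => <-.
have invP : forall pi : CC, Defs.invariant p (p + k) m (PP p k m s2 s4 - pi%:MP)%R.
  by move=> pi t z g; rewrite actB actC (act_PP p hm hk s2 s4 g).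
have [pi hpi] := get_pi HI (fun t z g => act_PP p hm hk s2 s4 g).
have jpi : J (PP p k m s2 s4 - pi%:MP)%R.
  have gI : gamma p (p + k) m I (PP p k m s2 s4 - pi%:MP)%R by split; [exact: invP|].
  by rewrite eg in gI; case: gI.
have [iI hI _ _] := HI; have [iJ hJ _ _] := HJ.
have gI : gens p k m s1 s2 s3 s4 pi I by split.
have gJ : gens p k m s1 s2 s3 s4 pi J by split.
apply: functional_extensionality => f; apply: propositional_extensionality; split.
  exact: (incl hp kpos cop hm hk ns12 ns34 hz HI gI gJ iJ).
exact: (incl hp kpos cop hm hk ns12 ns34 hz HJ gJ gI iI).
Qed.
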